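(* Let $n$ be a positive integer and let $r_\star$ be an integer maximising $q_n^r$ over $r$. Then either \[ r_\star = \left\lceil \frac{1}{10}\left(5n+2-\sqrt{5n^2+20n+24}\right)\right\rceil \] or \[ r_\star = \frac{1}{10}\left(5n+2-\sqrt{5n^2+20n+24}\right)+1. \]
   Context: $P_n$ is the path on $[n]=\{1,\dots,n\}$ with edges $\{i,i+1\}$. $Q^{(r)}(P_n)$ is the family of $r$-element subsets of $[n]$ containing no two consecutive integers, and $q_n^r=|Q^{(r)}(P_n)|$. *)

(* Defs.v *)
From HB Require Import structures.
From mathcomp Require Import all_boot all_order all_algebra.
From mathcomp Require Import reals.
Set Implicit Arguments. Unset Strict Implicit. Unset Printing Implicit Defensive.

(* The path P_n on [n] = {1,...,n} is modelled on 'I_n = {0,...,n-1}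
   (shift by one); edges {i, i+1}. *)

Definition Qr (n r : nat) : {set {set 'I_n}} :=
  [set A : {set 'I_n} | (#|A| == r) &&
     [forall i in A, forall j in A, (val i).+1 != val j]].

Definition q (n r : nat) : nat := #|Qr n r|.

(* Main.v *)
Require Import Defs.
From HB Require Import structures.
From mathcomp Require Import all_boot all_order all_algebra.
From mathcomp Require Import reals.
From mathcomp Require Import zify ring lra.
Set Implicit Arguments. Unset Strict Implicit.
Definition cnd n (A : {set 'I_n}) := [forall i in A, forall j in A, (val i).+1 != val j].

Lemma QrE n r A : (A \in Qr n r) = (#|A| == r) && cnd A.
Proof. by rewrite inE. Qed.

Lemma cnd_imset m M (f : 'I_m -> 'I_M) (hf : forall i, val (f i) = val i) (B : {set 'I_m}) :
  cnd (f @: B) = cnd B.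
Proof.
apply/idP/idP.
- move/forall_inP=> H; apply/forall_inP=> i iB; apply/forall_inP=> j jB.
  have := H (f i) (imset_f f iB) => /forall_inP /(_ (f j) (imset_f f jB)).
  by rewrite !hf.
- move/forall_inP=> H; apply/forall_inP=> _ /imsetP[i iB ->].
  apply/forall_inP=> _ /imsetP[j jB ->]; rewrite !hf.
  exact: (forall_inP (H i iB)).
Qed.

Lemma cnd_sub n (S A : {set 'I_n}) : S \subset A -> cnd A -> cnd S.
Proof.
move=> /subsetP sSA /forall_inP H; apply/forall_inP=> i iS; apply/forall_inP=> j jS.
exact: (forall_inP (H i (sSA _ iS)) j (sSA _ jS)).
Qed.

Lemma inj_of m M (f : 'I_m -> 'I_M) (hf : forall i, val (f i) = val i) : injective f.
Proof. by move=> i j /(congr1 val); rewrite !hf => /val_inj. Qed.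

Lemma q0 n : q n 0 = 1.
Proof.
rewrite /q (_ : Qr n 0 = [set set0]) ?cards1 //.
apply/setP=> A; rewrite QrE in_set1 cards_eq0.
case: (A =P set0) => [->|] //=.
by apply/forall_inP=> i; rewrite inE.
Qed.

Lemma q_small n r : (n < r)%N -> q n r = 0.
Proof.
move=> h; rewrite /q (_ : Qr n r = set0) ?cards0 //.
apply/setP=> A; rewrite QrE inE.
have hA : (#|A| <= n)%N by rewrite -[n in (_ <= n)%N]card_ord max_card.
by case: eqP => //= eA; move: hA; rewrite eA; lia.
Qed.

Lemma q11 : q 1 1 = 1.
Proof.
rewrite /q (_ : Qr 1 1 = [set A : {set 'I_1} | #|A| == 1]).
  by rewrite card_draws card_ord.
apply/setP=> A; rewrite QrE inE; case: (_ == 1) => //=.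
by apply/forall_inP=> i _; apply/forall_inP=> j _; rewrite !ord1.
Qed.

Lemma qrec n r : q n.+2 r.+1 = q n.+1 r.+1 + q n r.
Proof.
rewrite /q -(cardsID [set A : {set 'I_n.+2} | ord_max \notin A] (Qr n.+2 r.+1)).
congr (_ + _).
- pose w := widen_ord (leqnSn n.+1) : 'I_n.+1 -> 'I_n.+2.
  have hw : forall i, val (w i) = val i by [].
  have winj := inj_of hw.
  rewrite (_ : _ :&: _ = (fun B : {set 'I_n.+1} => w @: B) @: Qr n.+1 r.+1).
    by rewrite card_imset //; apply: imset_inj.
  apply/setP=> A; rewrite !inE; apply/idP/idP.
  + case/andP => /andP[cA condA] nmax; have e : w @: (w @^-1: A) = A.
        apply/setP=> x; apply/imsetP/idP.
          by case=> y; rewrite inE => yA ->.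
        move=> xA.
        have xlt : (val x < n.+1)%N.
          have := ltn_ord x; rewrite ltnS leq_eqVlt; case/orP=> // /eqP ex.
          have : x = ord_max by apply/val_inj.
          by move=> ex'; move: nmax; rewrite -ex' xA.
        exists (Ordinal xlt); first by rewrite inE (_ : w _ = x) //; apply/val_inj.
        by apply/val_inj.
      apply/imsetP; exists (w @^-1: A).
      by rewrite QrE -(card_imset _ winj) -(cnd_imset hw) e cA; exact: condA.
    by rewrite e.
  + case/imsetP => B; rewrite QrE => /andP[cB condB] ->.
    have hc := cnd_imset hw B; rewrite /cnd in hc condB.
    rewrite card_imset // hc cB condB /=.
    apply/imsetP => [[y _ /(congr1 val) h]].
    by have := ltn_ord y; rewrite -[val y]hw -h /= ltnn.
- pose g := widen_ord (leq_trans (leqnSn n) (leqnSn n.+1)) : 'I_n -> 'I_n.+2.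
  have hg : forall i, val (g i) = val i by [].
  have ginj := inj_of hg.
  have nmg : forall B : {set 'I_n}, ord_max \notin g @: B.
    move=> B; apply/imsetP => [[y _ /(congr1 val) h]].
    by have := ltn_ord y; rewrite -[val y]hg -h /=; lia.
  have hinj : injective (fun B : {set 'I_n} => ord_max |: g @: B).
    move=> B1 B2 /= /(congr1 (fun S => S :\ ord_max)).
    by rewrite !setU1K // => /(imset_inj ginj).
  rewrite (_ : _ :\: _ = (fun B : {set 'I_n} => ord_max |: g @: B) @: Qr n r).
    by rewrite card_imset.
  apply/setP=> A; rewrite !inE negbK; apply/idP/idP.
  + case/andP => mA /andP[cA condA]; have e : ord_max |: g @: (g @^-1: A) = A.
        apply/setP=> x; rewrite in_setU1; apply/orP/idP.
          case=> [/eqP -> //|/imsetP[y]]; by rewrite inE => yA ->.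
        move=> xA; case: (x =P ord_max) => [->|nx]; first by left.
        right.
        have xlt : (val x < n)%N.
          have := ltn_ord x; rewrite ltnS leq_eqVlt; case/orP=> [/eqP ex|].
            by case: nx; apply/val_inj.
          rewrite ltnS leq_eqVlt; case/orP=> // /eqP ex.
          have := forall_inP (forall_inP condA x xA) _ mA.
          move/eqP => h; exfalso; apply: h; rewrite /=; lia.
        apply/imsetP; exists (Ordinal xlt); first by rewrite inE (_ : g _ = x) //; apply/val_inj.
        by apply/val_inj.
      apply/imsetP; exists (g @^-1: A).
      rewrite QrE; apply/andP; split.
        by have := cA; rewrite -{1}e cardsU1 nmg card_imset // add1n eqSS.
      suff : cnd (g @: (g @^-1: A)).
        by rewrite (cnd_imset hg).
      apply: (cnd_sub (A := A)); last by [].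
      by apply/subsetP=> y /imsetP[z]; rewrite inE => zA ->.
    by rewrite e.
  + case/imsetP => B; rewrite QrE => /andP[cB condB] ->.
    rewrite cardsU1 nmg card_imset // in_setU1 eqxx /=. rewrite add1n eqSS cB /=.
    apply/forall_inP=> i; rewrite in_setU1; case/orP=> [/eqP ->|iB].
      apply/forall_inP=> j _; have := ltn_ord j; rewrite /=; lia.
    apply/forall_inP=> j; rewrite in_setU1; case/orP=> [/eqP ->|jB].
      case/imsetP: iB => y _ ->; have := ltn_ord y; rewrite /=; lia.
    have c2 : cnd (g @: B) by rewrite (cnd_imset hg).
    exact: (forall_inP (forall_inP c2 i iB) j jB).
Qed.

Lemma qE n r : q n r = 'C(n.+1 - r, r).
Proof.
suff H : forall n, (forall r, q n r = 'C(n.+1 - r, r)) /\ (forall r, q n.+1 r = 'C(n.+2 - r, r)).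
  by case: (H n).
clear n r; elim=> [|n [IHa IHb]].
  split=> [[|r]|[|[|r]]].
  - by rewrite q0.
  - by rewrite q_small // subSS sub0n bin0n.
  - by rewrite q0.
  - by rewrite q11.
  - by rewrite q_small // subSS subSS sub0n bin0n.
split=> // [[|r]]; first by rewrite q0 bin0.
rewrite qrec IHa IHb subSS.
case: (leqP r n.+1) => h.
  by rewrite (_ : (n.+3 - r.+1 = (n.+1 - r).+1)%N); [rewrite binS | lia].
have e1 : (n.+3 - r.+1 = 0)%N by lia.
have e2 : (n.+1 - r = 0)%N by lia.
by rewrite e1 e2 !bin0n; case: r h {e1 e2}.
Qed.

Lemma q_ratio r k : q (r.*2 + k.+1) r.+1 * ((r + 1) * (r + k + 2)) =
  q (r.*2 + k.+1) r * ((k + 1) * (k + 2)).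
Proof.
rewrite !qE.
have -> : ((r.*2 + k.+1).+1 - r.+1 = r + k + 1)%N by rewrite -addnn; lia.
have -> : ((r.*2 + k.+1).+1 - r = (r + k + 1).+1)%N by rewrite -addnn; lia.
have h1 := mul_bin_left (r + k + 1) r.
have h2 := mul_bin_down (r + k + 1).+1 r.
rewrite /= in h2.
have e3 : (r + k + 1 - r = k + 1)%N by lia.
have e4 : ((r + k + 1).+1 - r = k + 2)%N by lia.
rewrite e3 in h1; rewrite e4 in h2.
rewrite mulnA (mulnC _ (r+1)) addn1 h1 -addn1.
rewrite -mulnA (_ : (r + k + 2) = (r + k + 1).+1)%N; last by lia.
rewrite (mulnC _ (r + k + 1).+1) h2.
rewrite !add0n; set C := 'C(_, _); rewrite mulnA mulnC; congr (_ * _); lia.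
Qed.
Import Order.TTheory GRing.Theory Num.Theory.
Local Open Scope ring_scope.
Theorem mainTheorem3 (R : realType) (n rs : nat) :
  (0 < n)%N ->
  (forall r : nat, (q n r <= q n rs)%N) ->
  let x : R := (5 * n%:R + 2 - Num.sqrt (5 * n%:R ^+ 2 + 20 * n%:R + 24)) / 10 in
  rs%:~R = (Num.ceil x)%:~R :> R \/ rs%:R = x + 1.
Proof.
move=> n0 hmax x.
set D : R := 5 * n%:R ^+ 2 + 20 * n%:R + 24.
set s := Num.sqrt D.
have nge0 : 0 <= n%:R :> R by [].
have D0 : 0 <= D by rewrite /D; nra.
have s0 : 0 <= s by apply: sqrtr_ge0.
have ss : s ^+ 2 = D by apply: sqr_sqrtr.
have xe : 10 * x = 5 * n%:R + 2 - s by rewrite /x mulrC divfK // pnatr_eq0.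
have qpos : (0 < q n rs)%N by have := hmax 0%N; rewrite q0.
have hrs : (rs.*2 <= n.+1)%N.
  by move: qpos; rewrite qE bin_gt0; lia.
have hA : rs%:R >= x.
  case: (leP x rs%:R) => // hlt; exfalso.
  have s2 : 2 < s by rewrite /D in ss; nra.
  have h : ((rs * 2)%:R < n%:R :> R) by rewrite natrM; lra.
  move: h; rewrite ltr_nat => h.
  have [k ek] : exists k, n = (rs.*2 + k.+1)%N by exists (n - rs.*2).-1; lia.
  have hn : n%:R = 2 * rs%:R + k%:R + 1 :> R.
    by rewrite ek -addnn -addn1 !natrD; lra.
  have hlt2 : ((rs + 1) * (rs + k + 2) < (k + 1) * (k + 2))%N.
    rewrite -(ltr_nat R) !natrM !natrD.
    have ha : s < 5 * n%:R + 2 - 10 * rs%:R by lra.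
    rewrite /D hn in ss.
    rewrite hn in ha.
    have hp : 0 < (5 * k%:R + 7 - s) * (5 * k%:R + 7 + s) by apply: mulr_gt0; lra.
    nra.
  have hr := q_ratio rs k; rewrite -ek in hr.
  have h1 := hmax rs.+1.
  have : (q n rs * ((rs + 1) * (rs + k + 2)) < q n rs * ((k + 1) * (k + 2)))%N.
    by rewrite ltn_pmul2l.
  rewrite -hr ltnNge => /negP; apply.
  exact: leq_mul h1 (leqnn _).
have hB : rs%:R <= x + 1.
  case: (leP rs%:R (x + 1)) => // hlt; exfalso.
  have xg : -1 < x.
    suff : s < 5 * n%:R + 12 by lra.
    have h5 : 0 < 5 * n%:R + 12 - s by rewrite /D in ss; nra.
    lra.
  case: rs hmax qpos hrs hA hlt => [|r] hmax qpos hrs hA hlt; first by move: hlt; rewrite (_ : 0%:R = 0 :> R) //; lra.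
  have [k ek] : exists k, n = (r.*2 + k.+1)%N by exists (n - r.*2).-1; lia.
  have hn : n%:R = 2 * r%:R + k%:R + 1 :> R.
    by rewrite ek -addnn -addn1 !natrD; lra.
  have hlt2 : ((k + 1) * (k + 2) < (r + 1) * (r + k + 2))%N.
    rewrite -(ltr_nat R) !natrM !natrD.
    have ha : 5 * k%:R + 7 < s by rewrite -natr1 in hlt; lra.
    rewrite /D hn in ss.
    have k0 : 0 <= k%:R :> R by [].
    have hp : 0 < (s - (5 * k%:R + 7)) * (s + (5 * k%:R + 7)) by apply: mulr_gt0; lra.
    nra.
  have hr := q_ratio r k; rewrite -ek in hr.
  have h1 := hmax r.
  have qr : (0 < q n r)%N by rewrite qE bin_gt0; lia.
  have : (q n r * ((k + 1) * (k + 2)) < q n r * ((r + 1) * (r + k + 2)))%N.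
    by rewrite ltn_pmul2l.
  rewrite -hr ltnNge => /negP; apply.
  exact: leq_mul h1 (leqnn _).
case: (eqVneq (rs%:R) (x + 1)) => [e|ne]; [by right | left].
have hc : Num.ceil x = rs%:Z.
  have ez : (rs%:Z)%:~R = rs%:R :> R by [].
  apply: ceil_def; rewrite intrB ez.
  have : rs%:R < x + 1 by rewrite lt_neqAle ne hB.
  move: hA; clear; lra.
by rewrite hc.
Qed.
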